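(* Any vector space over a division ring is locally trace equivalent to its underlying additive group. Hence the local trace equivalence class of an infinite vector space over a division ring is determined by the characteristic of the division ring.
   Context: A vector space over a division ring $\mathbb{E}$ is viewed as a structure in the language of abelian groups together with unary functions $v\mapsto\lambda v$ for each $\lambda\in\mathbb{E}$. ''Definable'' means with parameters. $\mathcal{N}$ locally trace defines $\mathcal{M}$ if there is a possibly infinite collection $\mathcal{E}$ of functions $M\to N$ such that every $\mathcal{M}$-definable subset of every $M^m$ is of the form $\{(a_1,\dots,a_m) : (f_1(a_{i_1}),\dots,f_n(a_{i_n}))\in Y\}$ for some $f_j\in\mathcal{E}$, $i_j\in\{1,\dots,m\}$ and $\mathcal{N}$-definable $Y\subseteq N^n$. A theory $T$ locally trace defines $T^*$ if some model of $T$ locally trace defines some model of $T^*$; two structures are locally trace equivalent if each of their theories locally trace defines the other. *)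

(* Defs.v *)
From HB Require Import structures.
From mathcomp Require Import all_boot all_algebra.

Set Implicit Arguments.
Unset Strict Implicit.
Unset Printing Implicit Defensive.

Import GRing.Theory.
Local Open Scope ring_scope.

Record signature := Sig {
  fsym : Type; farity : fsym -> nat;
  rsym : Type; rarity : rsym -> nat }.

Inductive term (L : signature) : Type :=
| Var : nat -> term L
| App : forall f : fsym L, ('I_(farity f) -> term L) -> term L.

Inductive formula (L : signature) : Type :=
| FEq : term L -> term L -> formula L
| FRel : forall r : rsym L, ('I_(rarity r) -> term L) -> formula L
| FFalse : formula L
| FImp : formula L -> formula L -> formula L
| FAnd : formula L -> formula L -> formula L
| FOr : formula L -> formula L -> formula L
| FEx : formula L -> formula L   (* binds de Bruijn variable 0 *)
| FAll : formula L -> formula L.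

Record structure (L : signature) := Struct {
  carrier :> Type;
  fint : forall f : fsym L, ('I_(farity f) -> carrier) -> carrier;
  rint : forall r : rsym L, ('I_(rarity r) -> carrier) -> Prop }.

Definition scons (T : Type) (x : T) (e : nat -> T) (n : nat) : T :=
  match n with 0 => x | S k => e k end.

Fixpoint eval (L : signature) (M : structure L) (e : nat -> M) (t : term L) : M :=
  match t with
  | Var i => e i
  | App f ts => @fint L M f (fun j => eval e (ts j))
  end.

Fixpoint sat (L : signature) (M : structure L) (e : nat -> M) (p : formula L) : Prop :=
  match p with
  | FEq t u => eval e t = eval e u
  | FRel r ts => @rint L M r (fun j => eval e (ts j))
  | FFalse => False
  | FImp p q => sat e p -> sat e q
  | FAnd p q => sat e p /\ sat e q
  | FOr p q => sat e p \/ sat e q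
  | FEx p => exists x : M, sat (scons x e) p
  | FAll p => forall x : M, sat (scons x e) p
  end.

Fixpoint term_bound (L : signature) (k : nat) (t : term L) : Prop :=
  match t with
  | Var i => (i < k)%N
  | App f ts => forall j, term_bound k (ts j)
  end.

Fixpoint formula_bound (L : signature) (k : nat) (p : formula L) : Prop :=
  match p with
  | FEq t u => term_bound k t /\ term_bound k u
  | FRel r ts => forall j, term_bound k (ts j)
  | FFalse => True
  | FImp p q | FAnd p q | FOr p q => formula_bound k p /\ formula_bound k q
  | FEx p | FAll p => formula_bound k.+1 p
  end.

Definition sentence (L : signature) (p : formula L) := formula_bound 0 p.

(** N is a model of the complete theory Th(M) (structures are nonempty) *)
Definition model_of_theory_of (L : signature) (M N : structure L) : Prop :=
  inhabited N /\
  forall p : formula L, sentence p ->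
    ((forall e : nat -> M, sat e p) <-> (forall e : nat -> N, sat e p)).

(** environment: variables 0..m-1 are the tuple a, variables m, m+1, ... the parameters b *)
Definition tuple_env (T : Type) (m : nat) (a : 'I_m -> T) (b : nat -> T) (i : nat) : T :=
  match (insub i : option 'I_m) with
  | Some j => a j
  | None => b (i - m)%N
  end.

Definition definable (L : signature) (M : structure L) (m : nat)
    (X : ('I_m -> M) -> Prop) : Prop :=
  exists (p : formula L) (b : nat -> M),
    forall a : 'I_m -> M, X a <-> sat (tuple_env a b) p.

Definition loc_trace_defines (L1 L2 : signature) (N : structure L1) (M : structure L2) : Prop :=
  exists E : ((M : Type) -> (N : Type)) -> Prop,
    forall (m : nat) (X : ('I_m -> M) -> Prop), definable X ->
      exists (n : nat) (f : 'I_n -> M -> N) (idx : 'I_n -> 'I_m) (Y : ('I_n -> N) -> Prop),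
        (forall j, E (f j)) /\ definable Y /\
        forall a : 'I_m -> M, X a <-> Y (fun j => f j (a (idx j))).

Definition theory_loc_trace_defines (L1 L2 : signature) (M : structure L1) (N : structure L2) : Prop :=
  exists (M' : structure L1) (N' : structure L2),
    model_of_theory_of M M' /\ model_of_theory_of N N' /\ loc_trace_defines M' N'.

Definition loc_trace_equiv (L1 L2 : signature) (M : structure L1) (N : structure L2) : Prop :=
  theory_loc_trace_defines M N /\ theory_loc_trace_defines N M.

Inductive ab_fsym := AZero | APlus | ANeg.
Definition ab_arity (f : ab_fsym) : nat :=
  match f with AZero => 0 | APlus => 2 | ANeg => 1 end.

Inductive vs_fsym (K : Type) := VZero | VPlus | VNeg | VScal of K.
Arguments VZero {K}. Arguments VPlus {K}. Arguments VNeg {K}.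
Definition vs_arity (K : Type) (f : vs_fsym K) : nat :=
  match f with VZero => 0 | VPlus => 2 | VNeg => 1 | VScal _ => 1 end.

Definition no_rarity (r : Empty_set) : nat := match r with end.

Definition ab_sig : signature := @Sig ab_fsym ab_arity Empty_set no_rarity.
Definition vs_sig (K : Type) : signature := @Sig (vs_fsym K) (@vs_arity K) Empty_set no_rarity.

Definition no_rint (T : Type) (r : Empty_set) (a : 'I_(no_rarity r) -> T) : Prop :=
  match r with end.

Definition ab_fint (V : zmodType) (f : ab_fsym) : ('I_(ab_arity f) -> V) -> V :=
  match f return ('I_(ab_arity f) -> V) -> V with
  | AZero => fun _ => 0
  | APlus => fun a => a ord0 + a ord_max
  | ANeg => fun a => - a ord0
  end.

Definition group_struct (V : zmodType) : structure ab_sig :=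
  @Struct ab_sig V (@ab_fint V) (@no_rint V).

Definition vs_fint (K : pzRingType) (V : lmodType K) (f : vs_fsym K) :
    ('I_(vs_arity f) -> V) -> V :=
  match f return ('I_(vs_arity f) -> V) -> V with
  | VZero => fun _ => 0
  | VPlus => fun a => a ord0 + a ord_max
  | VNeg => fun a => - a ord0
  | VScal k => fun a => k *: a ord0
  end.

Definition vs_struct (K : pzRingType) (V : lmodType K) : structure (vs_sig K) :=
  @Struct (vs_sig K) V (@vs_fint K V) (@no_rint V).

Definition division_ring (K : unitRingType) : Prop :=
  forall x : K, x != 0 -> x \is a GRing.unit.

Definition infinite_type (T : eqType) : Prop := ~ exists s : seq T, forall x : T, x \in s.

(* Main.v *)
Require Import Defs.
From HB Require Import structures.
From mathcomp Require Import all_boot all_algebra.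
From mathcomp Require Import boolp classical_sets functions.
Set Implicit Arguments.
Unset Strict Implicit.
Unset Printing Implicit Defensive.
Import GRing.Theory.
Local Open Scope ring_scope.

Section Gen.
Variable L : signature.
Variable M : structure L.

Lemma eval_bound k (e e' : nat -> M) t :
  term_bound k t -> (forall i, (i < k)%N -> e i = e' i) -> eval e t = eval e' t.
Proof.
elim: t => [i|f ts IH] /= Hb He; first by apply: He.
f_equal; apply: funext => j; exact: IH.
Qed.

Lemma sat_bound p : forall k (e e' : nat -> M), formula_bound k p ->
  (forall i, (i < k)%N -> e i = e' i) -> (sat e p <-> sat e' p).
Proof.
elim: p => [t u|r ts||p IHp q IHq|p IHp q IHq|p IHp q IHq|p IHp|p IHp] k e e' /= Hb He.
- by rewrite (eval_bound Hb.1 He) (eval_bound Hb.2 He).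
- have -> : (fun j => eval e (ts j)) = (fun j => eval e' (ts j)).
    by apply: funext => j; apply: eval_bound.
  by [].
- by [].
- have := IHp k e e' Hb.1 He; have := IHq k e e' Hb.2 He; tauto.
- have := IHp k e e' Hb.1 He; have := IHq k e e' Hb.2 He; tauto.
- have := IHp k e e' Hb.1 He; have := IHq k e e' Hb.2 He; tauto.
- have He' : forall x i, (i < k.+1)%N -> scons x e i = scons x e' i.
    by move=> x [|i] //= Hi; apply: He.
  split=> [[x Hx]|[x Hx]]; exists x.
  + by apply/(IHp k.+1 (scons x e) (scons x e') Hb (He' x)).
  + by apply/(IHp k.+1 (scons x e) (scons x e') Hb (He' x)).
- have He' : forall x i, (i < k.+1)%N -> scons x e i = scons x e' i.
    by move=> x [|i] //= Hi; apply: He.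
  split=> H x.
  + by apply/(IHp k.+1 (scons x e) (scons x e') Hb (He' x)).
  + by apply/(IHp k.+1 (scons x e) (scons x e') Hb (He' x)).
Qed.

Lemma sentence_env p (e e' : nat -> M) : sentence p -> (sat e p <-> sat e' p).
Proof. by move=> Hp; apply: (sat_bound Hp). Qed.

Lemma model_refl : inhabited M -> model_of_theory_of M M.
Proof. by move=> HM; split. Qed.

End Gen.

Lemma tuple_env_lt T m (a : 'I_m -> T) b (j : 'I_m) : tuple_env a b j = a j.
Proof. by rewrite /tuple_env valK. Qed.

Lemma tuple_env_ge T m (a : 'I_m -> T) b i : (m <= i)%N -> tuple_env a b i = b (i - m)%N.
Proof. by move=> H; rewrite /tuple_env insubF // ltnNge H. Qed.

Section Tr.
Variable K : pzRingType.

Definition tr_app (f : ab_fsym) : ('I_(ab_arity f) -> term (vs_sig K)) -> term (vs_sig K) :=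
  match f with
  | AZero => fun r => @App (vs_sig K) VZero r
  | APlus => fun r => @App (vs_sig K) VPlus r
  | ANeg => fun r => @App (vs_sig K) VNeg r
  end.

Fixpoint tr_term (t : term ab_sig) : term (vs_sig K) :=
  match t with
  | Var i => Var _ i
  | App f ts => tr_app (fun j => tr_term (ts j))
  end.

Fixpoint tr (p : formula ab_sig) : formula (vs_sig K) :=
  match p with
  | FEq t u => FEq (tr_term t) (tr_term u)
  | FRel r _ => match r : Empty_set with end
  | FFalse => FFalse _
  | FImp p q => FImp (tr p) (tr q)
  | FAnd p q => FAnd (tr p) (tr q)
  | FOr p q => FOr (tr p) (tr q)
  | FEx p => FEx (tr p)
  | FAll p => FAll (tr p)
  end.

Variable V : lmodType K.

Lemma eval_tr (e : nat -> V) t :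
  @eval _ (vs_struct V) e (tr_term t) = @eval _ (group_struct V) e t.
Proof.
elim: t => [i|f ts IH] //=.
by case: f ts IH => ts IH /=; rewrite ?IH.
Qed.

Lemma sat_tr p : forall (e : nat -> V),
  @sat _ (vs_struct V) e (tr p) <-> @sat _ (group_struct V) e p.
Proof.
elim: p => [t u|r ts||p IHp q IHq|p IHp q IHq|p IHp q IHq|p IHp|p IHp] e /=.
- by rewrite !eval_tr.
- by case: r ts.
- by [].
- have := IHp e; have := IHq e; tauto.
- have := IHp e; have := IHq e; tauto.
- have := IHp e; have := IHq e; tauto.
- by split=> [[x Hx]|[x Hx]]; exists x; apply/IHp.
- by split=> H x; apply/IHp.
Qed.

Lemma definable_tr m (Y : ('I_m -> V) -> Prop) :
  @definable _ (group_struct V) m Y -> @definable _ (vs_struct V) m Y.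
Proof.
move=> [p [b Hp]]; exists (tr p), b => a.
rewrite Hp; symmetry; apply: sat_tr.
Qed.

End Tr.
Section QE.
Variable K : unitRingType.
Hypothesis divK : division_ring K.

Definition lform := seq (nat * K).
Definition scale (c : K) (l : lform) : lform := [seq (p.1, c * p.2) | p <- l].

Definition combine (f : vs_fsym K) : ('I_(vs_arity f) -> lform) -> lform :=
  match f with
  | VZero => fun _ => [::]
  | VPlus => fun r => r ord0 ++ r ord_max
  | VNeg => fun r => scale (-1) (r ord0)
  | VScal k => fun r => scale k (r ord0)
  end.

Fixpoint lin (t : term (vs_sig K)) : lform :=
  match t with
  | Var i => [:: (i, 1)]
  | App f ts => combine (fun j => lin (ts j))
  end.

Definition lit := (lform * bool)%type.

Definition dand (D1 D2 : seq (seq lit)) : seq (seq lit) :=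
  flatten [seq [seq c1 ++ c2 | c2 <- D2] | c1 <- D1].

Definition dneg (D : seq (seq lit)) : seq (seq lit) :=
  foldr (fun c acc => dand [seq [:: (l.1, ~~ l.2)] | l <- c] acc) [:: [::]] D.

Definition coef0 (l : lform) : K := \sum_(p <- l | p.1 == 0%N) p.2.
Definition rest (l : lform) : lform := [seq (p.1.-1, p.2) | p <- l & p.1 != 0%N].
Definition subst (l0 : lform) (l : lform) : lform :=
  rest l ++ scale (- (coef0 l * (coef0 l0)^-1)) (rest l0).

Definition elim_conj (c : seq lit) : seq (seq lit) :=
  match [seq x <- c | x.2 && (coef0 x.1 != 0)] with
  | x0 :: _ => [:: [seq (subst x0.1 x.1, x.2) | x <- c]]
  | [::] => [:: [seq (rest x.1, x.2) | x <- c & coef0 x.1 == 0]]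
  end.

Definition exq (D : seq (seq lit)) := flatten (map elim_conj D).

Fixpoint qe (p : formula (vs_sig K)) : seq (seq lit) :=
  match p with
  | FEq t u => [:: [:: (lin t ++ scale (-1) (lin u), true)]]
  | FRel r _ => match r : Empty_set with end
  | FFalse => [::]
  | FImp p q => dneg (qe p) ++ qe q
  | FAnd p q => dand (qe p) (qe q)
  | FOr p q => qe p ++ qe q
  | FEx p => exq (qe p)
  | FAll p => dneg (exq (dneg (qe p)))
  end.

Section Sem.
Variable V : lmodType K.

Definition den (e : nat -> V) (l : lform) : V := \sum_(p <- l) p.2 *: e p.1.
Definition lsat e (x : lit) : bool := (den e x.1 == 0) == x.2.
Definition csat e (c : seq lit) := all (lsat e) c.
Definition dsat e (D : seq (seq lit)) := has (csat e) D.

Lemma den_cat e l1 l2 : den e (l1 ++ l2) = den e l1 + den e l2.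
Proof. by rewrite /den big_cat. Qed.

Lemma den_scale e c l : den e (scale c l) = c *: den e l.
Proof.
rewrite /den /scale big_map scaler_sumr; apply: eq_bigr => p _ /=.
by rewrite scalerA.
Qed.

Lemma eval_lin e t : @eval _ (vs_struct V) e t = den e (lin t).
Proof.
elim: t => [i|f ts IH] /=; first by rewrite /den big_seq1 scale1r.
case: f ts IH => [||| k] ts IH /=.
- by rewrite /den big_nil.
- by rewrite den_cat !IH.
- by rewrite den_scale IH scaleN1r.
- by rewrite den_scale IH.
Qed.

Lemma den_scons x e l : den (scons x e) l = coef0 l *: x + den e (rest l).
Proof.
elim: l => [|[[|i] k] l IH]; first by rewrite /den /coef0 /rest !big_nil scale0r addr0.
- rewrite /den /coef0 /rest /= !big_cons /= -/(den _ _) -/(den _ _) IH.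
  by rewrite scalerDl addrA.
- rewrite /den /coef0 /rest /= !big_cons /= -/(den _ _) -/(den _ _) IH.
  by rewrite addrCA.
Qed.

Lemma den_subst e l0 l :
  den e (subst l0 l) = den (scons (- ((coef0 l0)^-1 *: den e (rest l0))) e) l.
Proof.
rewrite den_scons /subst den_cat den_scale addrC; congr (_ + _).
by rewrite scalerN scaleNr scalerA.
Qed.

Lemma dsat_cat e D1 D2 : dsat e (D1 ++ D2) = dsat e D1 || dsat e D2.
Proof. by rewrite /dsat has_cat. Qed.

Lemma dsat_dand e D1 D2 : dsat e (dand D1 D2) = dsat e D1 && dsat e D2.
Proof.
elim: D1 => [|c D1 IH] //=.
rewrite /dand /= -/(dand _ _) dsat_cat IH /dsat has_map /preim /=.
have -> : has (fun x => csat e (c ++ x)) D2 = csat e c && has (csat e) D2.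
  clear IH; elim: D2 => [|c2 D2 IH2] /=; first by rewrite andbF.
  by rewrite IH2 /csat all_cat andb_orr.
by rewrite andb_orl.
Qed.

Lemma dsat_dneg e D : dsat e (dneg D) = ~~ dsat e D.
Proof.
elim: D => [|c D IH] //=.
rewrite dsat_dand IH negb_or; congr (_ && _).
rewrite /dsat has_map /preim /= /csat -has_predC.
apply: eq_has => x /=; rewrite andbT /lsat.
by case: (den e x.1 == 0); case: x.2.
Qed.

Definition inf (T : eqType) := forall s : seq T, exists x, x \notin s.

Hypothesis infV : inf V.

Lemma elim_conj_ok e c : dsat e (elim_conj c) <-> exists x, csat (scons x e) c.
Proof.
rewrite /elim_conj; case Hf: [seq x <- c | x.2 && (coef0 x.1 != 0)] => [|x0 s].
- rewrite /dsat /= orbF; split.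
  + move=> H.
    pose pts := [seq - ((coef0 x.1)^-1 *: den e (rest x.1)) | x <- c & coef0 x.1 != 0].
    have [x Hx] := infV pts; exists x.
    apply/allP => y Hy; rewrite /lsat den_scons.
    case: (eqVneq (coef0 y.1) 0) => Hc.
    * rewrite Hc scale0r add0r.
      move/allP: H => /(_ (rest y.1, y.2)) H; apply: H.
      by apply/mapP; exists y => //; rewrite mem_filter Hc eqxx.
    * have Hy2 : y.2 = false.
        case Hb: y.2 => //.
        have : y \in [seq x <- c | x.2 && (coef0 x.1 != 0)] by rewrite mem_filter Hb Hc.
        by rewrite Hf.
      rewrite Hy2 eqbF_neg; apply/eqP => E.
      have Hxe : x = - ((coef0 y.1)^-1 *: den e (rest y.1)).
        have Hu := divK Hc.
        rewrite -[x]scale1r -(mulVr Hu) -scalerA.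
        by move/eqP: E; rewrite addr_eq0 => /eqP ->; rewrite scalerN.
      move/negP: Hx; apply; rewrite Hxe /pts.
      by apply/mapP; exists y => //; rewrite mem_filter Hc.
  + move=> [x /allP Hx]; apply/allP => y /mapP [z Hz ->].
    move: Hz; rewrite mem_filter => /andP [/eqP Hc Hz].
    by have := Hx z Hz; rewrite /lsat den_scons Hc scale0r add0r.
- have : x0 \in [seq x <- c | x.2 && (coef0 x.1 != 0)] by rewrite Hf mem_head.
  rewrite mem_filter => /andP [/andP [Hb Hc] Hx0].
  rewrite /dsat /= orbF /csat all_map.
  have Heq : forall x, lsat e (subst x0.1 x.1, x.2) =
     lsat (scons (- ((coef0 x0.1)^-1 *: den e (rest x0.1))) e) x.
    by move=> x; rewrite /lsat /= den_subst.
  split.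
  + move=> H; exists (- ((coef0 x0.1)^-1 *: den e (rest x0.1))).
    by apply/allP => x Hx; rewrite -Heq; move/allP: H; apply.
  + move=> [x /allP H]; apply/allP => y Hy /=; rewrite Heq.
    have : lsat (scons x e) x0 by apply: H.
    rewrite /lsat Hb eqb_id den_scons addr_eq0 => /eqP E.
    suff -> : - ((coef0 x0.1)^-1 *: den e (rest x0.1)) = x by apply: H.
    have Hu := divK Hc.
    by rewrite -scalerN -E scalerA mulVr // scale1r.
Qed.

Lemma dsat_exq e D : dsat e (exq D) <-> exists x, dsat (scons x e) D.
Proof.
elim: D => [|c D IH] /=; first by split => // [[x]].
rewrite /exq /= -/(exq _) dsat_cat.
split.
- case/orP => [/elim_conj_ok [x Hx]|/IH [x Hx]]; exists x; move: Hx; rewrite /dsat /=.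
  + by move=> ->.
  + by move=> ->; rewrite orbT.
- move=> [x]; rewrite /dsat /= => /orP [H|H]; apply/orP.
  + by left; apply/elim_conj_ok; exists x.
  + by right; apply/IH; exists x.
Qed.

Theorem qe_ok p : forall e, @sat _ (vs_struct V) e p <-> dsat e (qe p).
Proof.
elim: p => [t u|r ts||p IHp q IHq|p IHp q IHq|p IHp q IHq|p IHp|p IHp] e /=.
- rewrite /dsat /= /csat /= /lsat /= den_cat den_scale scaleN1r !eval_lin.
  rewrite subr_eq0 andbT orbF eqb_id; split; [by move=> ->|by move/eqP].
- by case: r ts.
- by [].
- rewrite dsat_cat dsat_dneg; have := IHp e; have := IHq e.
  case: (dsat e (qe p)); case: (dsat e (qe q)) => /=; have ? : is_true true by []; have ? : ~ is_true false by []; tauto.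
- rewrite dsat_dand; have := IHp e; have := IHq e.
  case: (dsat e (qe p)); case: (dsat e (qe q)) => /=; have ? : is_true true by []; have ? : ~ is_true false by []; tauto.
- rewrite dsat_cat; have := IHp e; have := IHq e.
  case: (dsat e (qe p)); case: (dsat e (qe q)) => /=; have ? : is_true true by []; have ? : ~ is_true false by []; tauto.
- rewrite dsat_exq; split=> [[x Hx]|[x Hx]]; exists x; by apply/IHp.
- rewrite dsat_dneg; split.
  + move=> H; apply/negP => /dsat_exq [x]; rewrite dsat_dneg => /negP; apply.
    by apply/IHp.
  + move=> /negP H x; apply/IHp; apply: contrapT => Hn; apply: H.
    apply/dsat_exq; exists x; rewrite dsat_dneg; apply/negP => Hd; apply: Hn.
    exact: Hd.
Qed.

Lemma dsat0 D : dsat (fun _ => 0 : V) D = has (all (fun x : lit => x.2)) D.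
Proof.
apply: eq_has => c; apply: eq_all => x.
rewrite /lsat /den big1 => [|p _]; [by rewrite eqxx; case: x.2 | by rewrite scaler0].
Qed.

End Sem.

Lemma vs_equiv (V1 V2 : lmodType K) : inf V1 -> inf V2 ->
  model_of_theory_of (vs_struct V1) (vs_struct V2).
Proof.
move=> H1 H2; split; first by constructor; exact: 0.
move=> p Hp.
have E1 : (forall e : nat -> V1, @sat _ (vs_struct V1) e p) <-> has (all (fun x : lit => x.2)) (qe p).
  split=> [H|H e].
  - by rewrite -(dsat0 V1); apply/(qe_ok H1); apply: H.
  - by apply/(@sentence_env _ (vs_struct V1) p e (fun _ => 0) Hp); apply/(qe_ok H1); rewrite dsat0.
have E2 : (forall e : nat -> V2, @sat _ (vs_struct V2) e p) <-> has (all (fun x : lit => x.2)) (qe p).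
  split=> [H|H e].
  - by rewrite -(dsat0 V2); apply/(qe_ok H2); apply: H.
  - by apply/(@sentence_env _ (vs_struct V2) p e (fun _ => 0) Hp); apply/(qe_ok H2); rewrite dsat0.
by rewrite E1 E2.
Qed.

End QE.
Definition gzero : term ab_sig := @App ab_sig AZero (fun _ => Var ab_sig 0).
Definition gplus (t1 t2 : term ab_sig) : term ab_sig :=
  @App ab_sig APlus (fun j => if val j == 0%N then t1 else t2).

Section LinY.
Variable K : unitRingType.
Variable V : lmodType K.
Variable G : zmodType.
Variable g : V -> G.
Hypothesis g0 : g 0 = 0.
Hypothesis gD : forall x y, g (x + y) = g x + g y.
Hypothesis ginj : injective g.

Variable pos : nat * K -> nat.

Definition gsum (l : lform K) : term ab_sig :=
  foldr (fun p acc => gplus (Var ab_sig (pos p)) acc) gzero l.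
Definition glit (x : lit K) : formula ab_sig :=
  if x.2 then FEq (gsum x.1) gzero else FImp (FEq (gsum x.1) gzero) (FFalse _).
Definition gconj (c : seq (lit K)) : formula ab_sig :=
  foldr (fun x acc => FAnd (glit x) acc) (FImp (FFalse _) (FFalse _)) c.
Definition gdnf (D : seq (seq (lit K))) : formula ab_sig :=
  foldr (fun c acc => FOr (gconj c) acc) (FFalse _) D.

Variables (e : nat -> V) (ge : nat -> G).

Lemma eval_gsum (l : lform K) : (forall p, p \in l -> ge (pos p) = g (p.2 *: e p.1)) ->
  @eval _ (group_struct G) ge (gsum l) = g (den e l).
Proof.
elim: l => [|p l IH] H /=; first by rewrite /den big_nil g0.
rewrite /den big_cons gD -/(den _ _) -IH; last by move=> q Hq; apply: H; rewrite inE Hq orbT.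
by rewrite -H ?mem_head.
Qed.

Lemma sat_glit (x : lit K) : (forall p, p \in x.1 -> ge (pos p) = g (p.2 *: e p.1)) ->
  (@sat _ (group_struct G) ge (glit x) <-> lsat e x).
Proof.
move=> H; rewrite /glit /lsat.
have E : @eval _ (group_struct G) ge gzero = 0 by [].
have E2 : (@eval _ (group_struct G) ge (gsum x.1) = @eval _ (group_struct G) ge gzero)
   <-> den e x.1 = 0.
  rewrite E eval_gsum //; split; last by move=> ->.
  by move=> Hg; apply: ginj; rewrite Hg g0.
case: x.2 => /=; rewrite ?eqb_id ?eqbF_neg.
- by rewrite E2; split; [move=> ->|move/eqP].
- split; first by move=> Hn; apply/eqP => Hd; apply: Hn; apply/E2.
  by move/eqP => Hn Hd; apply: Hn; apply/E2.
Qed.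

Lemma sat_gconj (c : seq (lit K)) : (forall x, x \in c -> forall p, p \in x.1 -> ge (pos p) = g (p.2 *: e p.1)) ->
  (@sat _ (group_struct G) ge (gconj c) <-> csat e c).
Proof.
elim: c => [|x c IH] H /=; first by split.
rewrite (sat_glit (H x (mem_head _ _))).
rewrite IH; last by move=> y Hy; apply: H; rewrite inE Hy orbT.
by split; [move=> [-> ->]|move/andP].
Qed.

Lemma sat_gdnf (D : seq (seq (lit K))) : (forall c, c \in D -> forall x, x \in c -> forall p, p \in x.1 ->
     ge (pos p) = g (p.2 *: e p.1)) ->
  (@sat _ (group_struct G) ge (gdnf D) <-> dsat e D).
Proof.
elim: D => [|c D IH] H /=; first by split.
rewrite /dsat /= -/(dsat _ _).
rewrite (sat_gconj (H c (mem_head _ _))).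
rewrite IH; last by move=> y Hy; apply: H; rewrite inE Hy orbT.
by split; [case=> ->; rewrite ?orbT|move/orP].
Qed.

End LinY.

Definition allp (K : unitRingType) (D : seq (seq (lit K))) : seq (nat * K) :=
  flatten [seq flatten [seq x.1 | x <- c] | c <- D].

Lemma allpP (K : unitRingType) (D : seq (seq (lit K))) (c : seq (lit K)) (x : lit K) (p : nat * K) :
  c \in D -> x \in c -> p \in x.1 -> p \in allp D.
Proof.
move=> Hc Hx Hp; apply/flattenP; exists (flatten [seq x.1 | x <- c]); first exact: map_f.
by apply/flattenP; exists x.1 => //; exact: map_f.
Qed.

Definition p0 (K : unitRingType) : nat * K := (0%N, 0%R).

Lemma lin_trace (K : unitRingType) (V : lmodType K) (G : zmodType) (g : V -> G)
  (g0 : g 0 = 0) (gD : forall x y, g (x + y) = g x + g y) (ginj : injective g)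
  m (b : nat -> V) (D : seq (seq (lit K))) :
  exists n (f : 'I_n -> V -> G) (idx : 'I_n -> 'I_m) (Y : ('I_n -> G) -> Prop),
    @definable _ (group_struct G) n Y /\
    forall a, dsat (tuple_env a b) D <-> Y (fun j => f j (a (idx j))).
Proof.
set A := allp D.
set P := [seq p <- A | (p.1 < m)%N].
set Q := [seq p <- A | (m <= p.1)%N].
have Hidx : forall j : 'I_(size P), ((nth (p0 K) P j).1 < m)%N.
  move=> j; have : nth (p0 K) P j \in P by apply: mem_nth.
  by rewrite mem_filter => /andP [].
exists (size P), (fun j v => g ((nth (p0 K) P j).2 *: v)), (fun j => Ordinal (Hidx j)).
pose pos (p : nat * K) := if (p.1 < m)%N then index p P else (size P + index p Q)%N.
pose b' k := g ((nth (p0 K) Q k).2 *: b ((nth (p0 K) Q k).1 - m)%N).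
exists (fun y => @sat _ (group_struct G) (tuple_env y b') (gdnf pos D)).
split; first by exists (gdnf pos D), b'.
move=> a; symmetry; apply: (sat_gdnf g0 gD ginj) => c Hc x Hx p Hp.
have HA : p \in A by apply: (allpP Hc Hx Hp).
rewrite /pos; case: ifP => Hm.
- have HP : p \in P by rewrite mem_filter Hm HA.
  have Hi : (index p P < size P)%N by rewrite index_mem.
  rewrite (tuple_env_lt _ _ (Ordinal Hi)) (tuple_env_lt _ _ (Ordinal Hm)) /=.
  have E : Ordinal (Hidx (Ordinal Hi)) = Ordinal Hm.
    by apply: val_inj => /=; rewrite nth_index.
  by rewrite E /= nth_index.
- have HQ : p \in Q by rewrite mem_filter HA leqNgt Hm.
  have Hm' : (m <= p.1)%N by rewrite leqNgt Hm.
  rewrite tuple_env_ge ?leq_addr // addKn (tuple_env_ge _ _ Hm').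
  by rewrite /b' nth_index.
Qed.
Section Fin.
Variable L : signature.
Variable M : structure L.
Variable N : nat.
Variable en : nat -> M.
Hypothesis Hen : forall x : M, exists i, (i < N)%N /\ en i = x.

Definition FTrue : formula L := FImp (FFalse _) (FFalse _).

Lemma sat_foldAnd (T : eqType) (s : seq T) (F : T -> formula L) (e : nat -> M) :
  sat e (foldr (fun x acc => FAnd (F x) acc) FTrue s) <-> (forall x, x \in s -> sat e (F x)).
Proof.
elim: s => [|x s IH] /=; first by split.
rewrite IH; split.
- by move=> [H1 H2] y; rewrite inE => /orP [/eqP ->|]; [|apply: H2].
- by move=> H; split; [apply: H; rewrite mem_head|move=> y Hy; apply: H; rewrite inE Hy orbT].
Qed.

Lemma sat_foldOr (T : eqType) (s : seq T) (F : T -> formula L) (e : nat -> M) :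
  sat e (foldr (fun x acc => FOr (F x) acc) (FFalse _) s) <-> (exists x, x \in s /\ sat e (F x)).
Proof.
elim: s => [|x s IH] /=; first by split => // [[x []]].
rewrite IH; split.
- case=> [H|[y [Hy H]]]; [exists x; rewrite mem_head|exists y; rewrite inE Hy orbT]; by [].
- move=> [y []]; rewrite inE => /orP [/eqP ->|Hy H]; first by left.
  by right; exists y.
Qed.

Lemma finite_definable m (X : ('I_m -> M) -> Prop) : definable X.
Proof.
pose cw (w : {ffun 'I_m -> 'I_N}) :=
  foldr (fun i acc => FAnd (FEq (Var L (nat_of_ord i)) (Var L (m + w i)%N)) acc) FTrue (enum 'I_m).
pose W := filter (fun w : {ffun 'I_m -> 'I_N} => `[< X (fun i => en (w i)) >]) (enum {ffun 'I_m -> 'I_N}).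
exists (foldr (fun w acc => FOr (cw w) acc) (FFalse _) W), en => a.
rewrite sat_foldOr.
have Hcw : forall w, sat (tuple_env a en) (cw w) <-> (forall i, a i = en (w i)).
  move=> w; rewrite sat_foldAnd; split.
  - move=> H i; have := H i; rewrite mem_enum => /(_ isT) /=.
    by rewrite tuple_env_lt tuple_env_ge ?leq_addr // addKn.
  - move=> H i _ /=; rewrite tuple_env_lt tuple_env_ge ?leq_addr // addKn.
    exact: H.
split.
- move=> HX.
  have Hi : forall i : 'I_m, exists j : 'I_N, en j = a i.
    by move=> i; have [j [Hj E]] := Hen (a i); exists (Ordinal Hj).
  pose w := [ffun i => sval (cid (Hi i))].
  have Hw : forall i, a i = en (w i) by move=> i; rewrite ffunE; case: (cid (Hi i)).
  exists w; split; last by apply/Hcw.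
  rewrite mem_filter mem_enum andbT; apply/asboolP.
  by have <- : a = (fun i => en (w i)) by apply: funext.
- move=> [w []]; rewrite mem_filter => /andP [/asboolP HX _] /Hcw H.
  by have -> : a = (fun i => en (w i)) by apply: funext.
Qed.

End Fin.

Lemma inf_of_infinite (T : eqType) : infinite_type T -> inf T.
Proof.
move=> H s; apply: contrapT => Hn; apply: H; exists s => x.
by apply: contrapT => Hx; apply: Hn; exists x; apply/negP.
Qed.

Lemma part1 (K : unitRingType) (V : lmodType K) :
  division_ring K -> loc_trace_equiv (vs_struct V) (group_struct V).
Proof.
move=> divK; split.
- exists (vs_struct V), (group_struct V); split; first by apply: model_refl; constructor; exact: 0.
  split; first by apply: model_refl; constructor; exact: 0.
  exists (fun _ => True) => m X HX.
  exists m, (fun _ v => v), id, X; split => //; split => //.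
  exact: definable_tr.
- exists (group_struct V), (vs_struct V); split; first by apply: model_refl; constructor; exact: 0.
  split; first by apply: model_refl; constructor; exact: 0.
  exists (fun _ => True) => m X [p [b HX]].
  case: (pselect (inf V)) => Hinf.
  + have [n [f [idx [Y [HY HXY]]]]] :=
      @lin_trace K V V id erefl (fun _ _ => erefl) (fun _ _ h => h) m b (qe p).
    exists n, f, idx, Y; split => //; split => // a.
    by rewrite HX (qe_ok divK Hinf) HXY.
  + have [s Hs] : exists s : seq V, forall x, x \in s.
      apply: contrapT => Hn; apply: Hinf => s; apply: contrapT => Hx; apply: Hn.
      by exists s => x; apply: contrapT => Hy; apply: Hx; exists x; apply/negP.
    exists m, (fun _ v => v), id, X; split => //; split => //.
    apply: (@finite_definable _ (group_struct V) (size s) (fun i => nth 0 s i)).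
    by move=> x; exists (index x s); rewrite index_mem nth_index.
Qed.
Lemma char_transfer (R1 R2 : unitRingType) : division_ring R1 ->
  [pchar R1] =i [pchar R2] -> forall n : nat, n%:R = 0 :> R1 -> n%:R = 0 :> R2.
Proof.
move=> div1 Hc n Hn.
case: (posnP n) => [->|n0]; first by rewrite mulr0n.
have Hex : exists k, (0 < k)%N && (k%:R == 0 :> R1) by exists n; rewrite n0 Hn eqxx.
case: (ex_minnP Hex) => p /andP [p0 /eqP Hp] Pmin.
have Hpr : prime p.
  apply/primeP; split.
  - rewrite ltn_neqAle p0 andbT; apply/negP => /eqP E.
    by move: Hp; rewrite -E => /eqP; rewrite oner_eq0.
  - move=> d /dvdnP [e He].
    have Hed : (e%:R : R1) * d%:R = 0 by rewrite -natrM -He.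
    have dpos : (0 < d)%N by move: p0; rewrite He muln_gt0 => /andP [].
    have epos : (0 < e)%N by move: p0; rewrite He muln_gt0 => /andP [].
    case: (eqVneq (d%:R : R1) 0) => Hd.
    + have : (p <= d)%N by apply: Pmin; rewrite dpos Hd eqxx.
      have : (d <= p)%N by apply: dvdn_leq => //; rewrite He dvdn_mull.
      by move=> H1 H2; apply/orP; right; rewrite eqn_leq H1 H2.
    + have He0 : (e%:R : R1) = 0.
        by rewrite -(mulrK (div1 _ Hd) (e%:R)) Hed mul0r.
      have : (p <= e)%N by apply: Pmin; rewrite epos He0 eqxx.
      have : (e <= p)%N by apply: dvdn_leq => //; rewrite He dvdn_mulr.
      move=> H1 H2; have Eep : e = p by apply/eqP; rewrite eqn_leq H1 H2.
      apply/orP; left; move: He; rewrite Eep -{1}[p]muln1 => /eqP.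
      rewrite eqn_mul2l => /orP [/eqP E|]; first by rewrite E in p0.
      by rewrite eq_sym.
have HpR1 : p \in [pchar R1] by rewrite inE Hpr Hp eqxx.
have HpR2 : p \in [pchar R2] by rewrite -Hc.
apply/eqP; rewrite -(dvdn_pcharf HpR2) (dvdn_pcharf HpR1) Hn eqxx //.
Qed.

Section Sep.
Variables (K K' : unitRingType) (V' : lmodType K').
Hypotheses (divK : division_ring K) (divK' : division_ring K').
Hypothesis chK : forall n : nat, (n%:R = 0 :> K) <-> (n%:R = 0 :> K').

Lemma chKz (z : int) : (z%:~R = 0 :> K) <-> (z%:~R = 0 :> K').
Proof.
case: z => n.
- exact: chK.
- change (- (n.+1%:R) = 0 :> K <-> - (n.+1%:R) = 0 :> K').
  have := chK n.+1; split => /eqP; rewrite oppr_eq0 => /eqP H1; apply/eqP;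
    rewrite oppr_eq0; apply/eqP; tauto.
Qed.

Definition good (x : V') (S : set (V' * K)) :=
  [/\ S (0, 0), (forall a b, S a -> S b -> S (a.1 - b.1, a.2 - b.2)),
      (forall k, S (0, k) -> k = 0) & S (x, 1)].

Section GoodFacts.
Variables (x : V') (S : set (V' * K)).
Hypothesis gS : good x S.

Lemma good_opp a : S a -> S (- a.1, - a.2).
Proof.
case: gS => H0 HB _ _ Ha.
by have := HB _ _ H0 Ha; rewrite /= !sub0r.
Qed.

Lemma good_add a b : S a -> S b -> S (a.1 + b.1, a.2 + b.2).
Proof.
case: gS => H0 HB _ _ Ha Hb.
by have := HB _ _ Ha (good_opp Hb); rewrite /= !opprK.
Qed.

Lemma good_fun u c1 c2 : S (u, c1) -> S (u, c2) -> c1 = c2.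
Proof.
case: gS => H0 HB Hf _ H1 H2.
have := HB _ _ H1 H2; rewrite /= subrr => /Hf; exact: subr0_eq.
Qed.

Lemma good_muln a n : S a -> S (a.1 *+ n, a.2 *+ n).
Proof.
case: gS => H0 _ _ _ Ha; elim: n => [|n IH]; first by rewrite !mulr0n.
by rewrite !mulrS; apply: (good_add (b := (a.1 *+ n, a.2 *+ n))).
Qed.

Lemma good_mulz a z : S a -> S (a.1 *~ z, a.2 *~ z).
Proof.
move=> Ha; case: z => n; first exact: good_muln.
exact: (good_opp (good_muln n.+1 Ha)).
Qed.

End GoodFacts.

Lemma sep (x : V') : x != 0 ->
  exists phi : V' -> K, (forall u v, phi (u + v) = phi u + phi v) /\ phi x = 1.
Proof.
move=> x0.
pose P := fun S : set (V' * K) => S = set0 \/ good x S.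
have [A [PA Amax]] : exists A, P A /\ forall B, proper A B -> ~ P B.
  apply: Zorn_bigcup => F FP Ftot.
  have Fg : forall X a, F X -> X a -> good x X.
    move=> X a FX Xa; case: (FP X FX) => // X0.
    by rewrite X0 in Xa.
  case: (pselect (exists S, F S /\ good x S)) => [[S0 [FS0 gS0]]|Hno]; [right|left].
  - split.
    + by exists S0 => //; case: gS0.
    + move=> a b [X1 FX1 Ha] [X2 FX2 Hb].
      case: (Ftot X1 X2 FX1 FX2) => Hs.
      * exists X2 => //; case: (Fg X2 b FX2 Hb) => _ HB _ _; apply: HB => //.
        exact: Hs.
      * exists X1 => //; case: (Fg X1 a FX1 Ha) => _ HB _ _; apply: HB => //.
        exact: Hs.
    + move=> k [X FX Hk]; by case: (Fg X _ FX Hk) => _ _ Hf _; apply: Hf.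
    + by exists S0 => //; case: gS0.
  - apply/seteqP; split => a // [X FX Xa].
    by apply: Hno; exists X; split => //; apply: (Fg X a).
have gA : good x A.
  case: PA => // A0; exfalso.
  pose S0 := fun a : V' * K => exists z : int, a = (x *~ z, z%:~R).
  apply: (Amax S0).
  - rewrite A0; split => // Hs.
    by have := Hs (x, 1); apply; exists 1; rewrite mulr1z.
  - right; split.
    + by exists 0; rewrite mulr0z.
    + move=> a b [z1 ->] [z2 ->] /=; exists (z1 - z2).
      by rewrite mulrzBr intrB.
    + move=> k [z [E1 E2]].
      have : (z%:~R : K') *: x = 0 by rewrite scaler_int -E1.
      case: (eqVneq (z%:~R : K') 0) => Hz.
      * by move=> _; rewrite E2; apply/chKz.
      * move=> E; exfalso; move/negP: x0; apply; apply/eqP.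
        by rewrite -[x]scale1r -(mulVr (divK' Hz)) -scalerA E scaler0.
    + by exists 1; rewrite mulr1z.
have [gA0 gAB gAf gAx] := gA.
have Hall : forall y, exists k, A (y, k).
  move=> y; apply: contrapT => Hy.
  have [d Hd] : exists d : K, forall (z : int) c, A (y *~ z, c) -> c = d *~ z.
    case: (pselect (exists n, (0 < n)%N /\ exists c, A (y *+ n, c))) => [Hex|Hnex].
    - pose pr := fun n => (0 < n)%N && `[< exists c, A (y *+ n, c) >].
      have Hex' : exists n, pr n.
        by case: Hex => n [n0 Hc]; exists n; rewrite /pr n0; apply/asboolP.
      case: (ex_minnP Hex') => n0 /andP [n0pos /asboolP [c0 Hc0]] Hmin.
      have [d Hd0] : exists d : K, d *+ n0 = c0.
        case: (eqVneq (n0%:R : K) 0) => Hn.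
        + exists 0; rewrite mul0rn.
          have Hy0 : y *+ n0 = 0 by rewrite -scaler_nat (proj1 (chK n0) Hn) scale0r.
          rewrite Hy0 in Hc0.
          by case: gA => _ _ Hf _; rewrite (Hf _ Hc0).
        + exists ((n0%:R)^-1 * c0).
          rewrite -(mulr_natl ((n0%:R)^-1 * c0) n0) mulrA mulrV ?mul1r //; exact: divK.
      exists d => z c Hc.
      have Hn0z : (n0%:Z != 0) by rewrite eqz_nat -lt0n.
      have r0 : 0 <= (z %% n0)%Z by apply: modz_ge0.
      have rlt : (z %% n0)%Z < n0%:Z by apply: ltz_pmod; rewrite ltz_nat.
      have Hq : A ((y *+ n0) *~ (z %/ n0)%Z, c0 *~ (z %/ n0)%Z).
        by apply: (good_mulz gA (a := (y *+ n0, c0))).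
      have Ez : y *~ z = (y *+ n0) *~ (z %/ n0)%Z + y *~ (z %% n0)%Z.
        by rewrite {1}(divz_eq z n0) mulrzDr mulrzA mulrzAC -pmulrn.
      have Hr : A (y *~ (z %% n0)%Z, c - c0 *~ (z %/ n0)%Z).
        have := gAB _ _ Hc Hq.
        by rewrite /= Ez addrC addKr.
      have [r' Er] : exists r' : nat, (z %% n0)%Z = r'%:Z.
        by move: r0; case: (z %% n0)%Z => [r'|r'] // _; exists r'.
      have r'0 : r' = 0%N.
        apply/eqP; rewrite -leqn0 leqNgt; apply/negP => r'pos.
        have : (n0 <= r')%N.
          apply: Hmin; rewrite /pr r'pos; apply/asboolP.
          by exists (c - c0 *~ (z %/ n0)%Z); rewrite pmulrn -Er.
        by rewrite leqNgt -ltz_nat -Er rlt.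
      have Ezq : z = (z %/ n0)%Z * n0 by rewrite {1}(divz_eq z n0) Er r'0 addr0.
      have Ez' : y *~ z = (y *+ n0) *~ (z %/ n0)%Z.
        by rewrite {1}Ezq mulrzA mulrzAC -pmulrn.
      rewrite Ez' in Hc.
      rewrite (good_fun gA Hc Hq) -Hd0 {2}Ezq mulrzA mulrzAC -pmulrn //.
    - exists 0 => z c Hc.
      case: z Hc => [[|n]|n] Hc.
      + by rewrite mulr0z in Hc; case: gA => _ _ Hf _; rewrite (Hf _ Hc) mulr0z.
      + by exfalso; apply: Hnex; exists n.+1; split => //; exists c.
      + exfalso; apply: Hnex; exists n.+1; split => //; exists (- c).
        by move: (good_opp gA Hc); rewrite /= NegzE mulrNz opprK -pmulrn.
  pose B := fun q : V' * K => exists a, A a /\ exists z : int, q = (a.1 + y *~ z, a.2 + d *~ z).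
  apply: (Amax B).
  - split.
    + move=> a Ha; exists a; split => //; exists 0; rewrite !mulr0z !addr0; by case: a {Ha}.
    + move=> HBA; apply: Hy; exists d; apply: HBA.
      exists (0, 0); split; first by case: gA.
      by exists 1; rewrite /= !mulr1z !add0r.
  - right; split.
    + exists (0, 0); split; first by case: gA.
      by exists 0; rewrite /= !mulr0z !addr0.
    + move=> q1 q2 [a1 [Ha1 [z1 ->]]] [a2 [Ha2 [z2 ->]]].
      exists (a1.1 - a2.1, a1.2 - a2.2); split; first by case: gA => _ HB _ _; apply: HB.
      exists (z1 - z2); rewrite /= !mulrzBr.
      by congr (_, _); rewrite opprD addrACA.
    + move=> k [a [Ha [z E]]].
      case: E => E1 E2.
      have Ea1 : a.1 = y *~ (- z) by rewrite mulrNz; apply/eqP; rewrite -addr_eq0 -E1.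
      have Ha' : A (y *~ (- z), a.2) by rewrite -Ea1; case: a Ha {E1 E2 Ea1}.
      by rewrite E2 (Hd _ _ Ha') mulrNz addNr.
    + exists (x, 1); split; first by case: gA.
      by exists 0; rewrite /= !mulr0z !addr0.
pose phi := fun y => sval (cid (Hall y)).
have Hphi : forall y, A (y, phi y) by move=> y; rewrite /phi; case: (cid (Hall y)).
exists phi; split.
- move=> u v; apply: (good_fun gA (Hphi (u + v))).
  exact: (good_add gA (Hphi u) (Hphi v)).
- by apply: (good_fun gA (Hphi x)); case: gA.
Qed.

End Sep.
Lemma part2_dir (K K' : unitRingType) (V : lmodType K) (V' : lmodType K') :
  division_ring K -> division_ring K' -> inf V -> inf V' ->
  (forall n : nat, (n%:R = 0 :> K) <-> (n%:R = 0 :> K')) ->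
  theory_loc_trace_defines (vs_struct V) (vs_struct V').
Proof.
move=> divK divK' infV infV' chK.
pose Aty := {phi : V' -> K | forall u v, phi (u + v) = phi u + phi v}.
pose W : lmodType K := (Aty -> K^o).
pose g : V' -> W := fun v phi => (sval phi v : K^o).
have g0 : g 0 = 0.
  apply: funext => [[phi Hphi]] /=; have E := Hphi 0 0; rewrite addr0 in E.
  by apply: (@addrI _ (phi 0)); rewrite addr0 -E.
have gD : forall x y, g (x + y) = g x + g y.
  by move=> x y; apply: funext => [[phi Hphi]] /=; rewrite Hphi.
have ginj : injective g.
  move=> u v Huv; apply/eqP; rewrite -subr_eq0; apply/negP => /negP Hne.
  have [phi [Hphi Hx]] := sep divK divK' chK Hne.
  have := congr1 (fun f : W => f (exist _ phi Hphi)) Huv => /= E.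
  have := Hphi (u - v) v; rewrite subrK E Hx => /(congr1 (fun t => t - phi v)).
  by rewrite subrr addrK => /esym /eqP; rewrite oner_eq0.
have infW : inf W.
  move=> s.
  pose pre (w : W) : V' := match pselect (exists v, g v = w) with
    | left H => sval (cid H) | right _ => 0 end.
  have [v Hv] := infV' (map pre s).
  exists (g v); apply/negP => Hg; move/negP: Hv; apply.
  have -> : v = pre (g v).
    rewrite /pre; case: pselect => [H|H]; last by exfalso; apply: H; exists v.
    by case: (cid H) => v' /= /ginj.
  exact: map_f.
exists (vs_struct W), (vs_struct V'); split; first exact: vs_equiv.
split; first by apply: model_refl; constructor; exact: 0.
exists (fun _ => True) => m X [p [b HX]].
have [n [f [idx [Y [HY HXY]]]]] := @lin_trace K' V' W g g0 gD ginj m b (qe p).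
exists n, f, idx, Y; split => //; split; first exact: definable_tr.
by move=> a; rewrite HX (qe_ok divK' infV') HXY.
Qed.

Theorem proposition4p1 :
  (forall (K : unitRingType) (V : lmodType K),
     division_ring K -> loc_trace_equiv (vs_struct V) (group_struct V)) /\
  (forall (K K' : unitRingType) (V : lmodType K) (V' : lmodType K'),
     division_ring K -> division_ring K' ->
     infinite_type V -> infinite_type V' ->
     [pchar K] =i [pchar K'] ->
     loc_trace_equiv (vs_struct V) (vs_struct V')).
Proof.
split; first by move=> K V; apply: part1.
move=> K K' V V' divK divK' iV iV' Hc.
have chK : forall n : nat, (n%:R = 0 :> K) <-> (n%:R = 0 :> K').
  move=> n; split; first exact: char_transfer.
  by apply: char_transfer => // q; rewrite Hc.
split; apply: part2_dir => //; try exact: inf_of_infinite.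
by move=> n; have := chK n; tauto.
Qed.
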